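(* $\mathcal{B}_f(H)$ is not Polishable in either the norm topology or the strong operator topology; that is, there is no Polish group topology on the additive group $\mathcal{B}_f(H)$ whose Borel sets coincide with the Borel sets induced on $\mathcal{B}_f(H)$ by the operator norm topology, nor one whose Borel sets coincide with those induced by the strong operator topology.
   Context: $H$ is a fixed infinite-dimensional separable complex Hilbert space, $\mathcal{B}(H)$ its bounded operators, and $\mathcal{B}_f(H)$ the finite-rank operators. The strong operator topology is the topology of pointwise norm convergence on $H$. *)

(* Defs.v *)
From Stdlib Require Import Reals List.
Set Implicit Arguments.
Open Scope R_scope.

Record C := mkC { Cre : R; Cim : R }.
Definition C0 : C := mkC 0 0.
Definition C1 : C := mkC 1 0.
Definition Cadd (a b : C) : C := mkC (Cre a + Cre b) (Cim a + Cim b).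
Definition Cmul (a b : C) : C :=
  mkC (Cre a * Cre b - Cim a * Cim b) (Cre a * Cim b + Cim a * Cre b).
Definition Cconj (a : C) : C := mkC (Cre a) (- Cim a).

Record PreHilbert := {
  hcar :> Type;
  hadd : hcar -> hcar -> hcar;
  hzero : hcar;
  hopp : hcar -> hcar;
  hscal : C -> hcar -> hcar;
  hinner : hcar -> hcar -> C }.

Arguments hadd {p}. Arguments hzero {p}. Arguments hopp {p}.
Arguments hscal {p}. Arguments hinner {p}.

Section HilbertDefs.
Variable H : PreHilbert.

Definition hsub (x y : H) : H := hadd x (hopp y).
Definition hnorm (x : H) : R := sqrt (Cre (hinner x x)).

Fixpoint lincomb (cs : list C) (vs : list H) : H :=
  match cs, vs with
  | c :: cs', v :: vs' => hadd (hscal c v) (lincomb cs' vs')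
  | _, _ => hzero
  end.

Definition in_span (vs : list H) (x : H) : Prop := exists cs, x = lincomb cs vs.

Definition is_inf_dim_sep_Hilbert : Prop :=
  (forall x y z : H, hadd x (hadd y z) = hadd (hadd x y) z) /\
  (forall x y : H, hadd x y = hadd y x) /\
  (forall x : H, hadd x hzero = x) /\
  (forall x : H, hadd x (hopp x) = hzero) /\
  (forall x : H, hscal C1 x = x) /\
  (forall a b (x : H), hscal (Cmul a b) x = hscal a (hscal b x)) /\
  (forall a (x y : H), hscal a (hadd x y) = hadd (hscal a x) (hscal a y)) /\
  (forall a b (x : H), hscal (Cadd a b) x = hadd (hscal a x) (hscal b x)) /\
  (* inner product, linear in the first variable *)
  (forall x y z : H, hinner (hadd x y) z = Cadd (hinner x z) (hinner y z)) /\
  (forall a (x y : H), hinner (hscal a x) y = Cmul a (hinner x y)) /\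
  (forall x y : H, hinner y x = Cconj (hinner x y)) /\
  (forall x : H, 0 <= Cre (hinner x x)) /\
  (forall x : H, hinner x x = C0 -> x = hzero) /\
  (forall u : nat -> H,
      (forall eps, eps > 0 -> exists N, forall m n, (N <= m)%nat -> (N <= n)%nat ->
          hnorm (hsub (u m) (u n)) < eps) ->
      exists l : H, forall eps, eps > 0 -> exists N, forall n, (N <= n)%nat ->
          hnorm (hsub (u n) l) < eps) /\
  (exists d : nat -> H, forall x eps, eps > 0 -> exists n, hnorm (hsub x (d n)) < eps) /\
  (forall vs : list H, exists x, ~ in_span vs x).

Definition op_add (S T : H -> H) : H -> H := fun x => hadd (S x) (T x).
Definition op_opp (S : H -> H) : H -> H := fun x => hopp (S x).

Definition is_linear (T : H -> H) : Prop :=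
  (forall x y, T (hadd x y) = hadd (T x) (T y)) /\
  (forall a x, T (hscal a x) = hscal a (T x)).

Definition is_bounded_op (T : H -> H) : Prop :=
  is_linear T /\ exists M, forall x, hnorm (T x) <= M * hnorm x.

Definition is_finite_rank (T : H -> H) : Prop :=
  is_bounded_op T /\ exists vs : list H, forall x, in_span vs (T x).

(** Operator-norm topology on B(H): U is open iff it contains, around each
    of its points T, a ball { S | ||S - T|| <= eps }. *)
Definition norm_open (U : (H -> H) -> Prop) : Prop :=
  (forall T, U T -> is_bounded_op T) /\
  (forall T, U T -> exists eps, eps > 0 /\
     forall S, is_bounded_op S ->
       (forall x, hnorm (hsub (S x) (T x)) <= eps * hnorm x) -> U S).

Definition sot_open (U : (H -> H) -> Prop) : Prop :=
  (forall T, U T -> is_bounded_op T) /\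
  (forall T, U T -> exists (xs : list H) eps, eps > 0 /\
     forall S, is_bounded_op S ->
       (forall x, In x xs -> hnorm (hsub (S x) (T x)) < eps) -> U S).

End HilbertDefs.

(** * General topology relative to a carrier subset S of a type X *)
Section Topo.
Variable X : Type.

Definition subset (A B : X -> Prop) : Prop := forall x, A x -> B x.

Definition is_topology_on (S : X -> Prop) (op : (X -> Prop) -> Prop) : Prop :=
  (forall U, op U -> subset U S) /\
  op S /\
  (forall U V, op U -> op V -> op (fun x => U x /\ V x)) /\
  (forall F : (X -> Prop) -> Prop, (forall U, F U -> op U) ->
     op (fun x => exists U, F U /\ U x)).

Definition sigma_algebra_on (S : X -> Prop) (Sg : (X -> Prop) -> Prop) : Prop :=
  (forall A, Sg A -> subset A S) /\
  Sg S /\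
  (forall A, Sg A -> Sg (fun x => S x /\ ~ A x)) /\
  (forall A : nat -> X -> Prop, (forall n, Sg (A n)) -> Sg (fun x => exists n, A n x)).

Definition borel_on (S : X -> Prop) (op : (X -> Prop) -> Prop) (A : X -> Prop) : Prop :=
  forall Sg, sigma_algebra_on S Sg -> (forall U, op U -> Sg U) -> Sg A.

Definition trace_borel (S' S : X -> Prop) (op : (X -> Prop) -> Prop) (A : X -> Prop) : Prop :=
  exists B, borel_on S op B /\ forall x, A x <-> (B x /\ S' x).

Definition prod_open (op : (X -> Prop) -> Prop) (P : X * X -> Prop) : Prop :=
  forall p, P p -> exists U V, op U /\ op V /\ U (fst p) /\ V (snd p) /\
     forall a b, U a -> V b -> P (a, b).

Definition polish_on (S : X -> Prop) (op : (X -> Prop) -> Prop) : Prop :=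
  is_topology_on S op /\
  (exists d : nat -> X, (forall n, S (d n)) /\
     forall U, op U -> (exists x, U x) -> exists n, U (d n)) /\
  (exists dist : X -> X -> R,
     (forall x y, S x -> S y -> 0 <= dist x y) /\
     (forall x y, S x -> S y -> (dist x y = 0 <-> x = y)) /\
     (forall x y, S x -> S y -> dist x y = dist y x) /\
     (forall x y z, S x -> S y -> S z -> dist x z <= dist x y + dist y z) /\
     (forall U, op U <-> (subset U S /\ forall x, U x -> exists eps, eps > 0 /\
                             forall y, S y -> dist x y < eps -> U y)) /\
     (forall u : nat -> X, (forall n, S (u n)) ->
        (forall eps, eps > 0 -> exists N, forall m n, (N <= m)%nat -> (N <= n)%nat ->
            dist (u m) (u n) < eps) ->
        exists l, S l /\ forall eps, eps > 0 -> exists N, forall n, (N <= n)%nat ->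
            dist (u n) l < eps)).

Definition polish_group_on (S : X -> Prop) (add : X -> X -> X) (opp : X -> X)
  (op : (X -> Prop) -> Prop) : Prop :=
  polish_on S op /\
  (forall W, op W -> prod_open op (fun p => S (fst p) /\ S (snd p) /\ W (add (fst p) (snd p)))) /\
  (forall W, op W -> op (fun x => S x /\ W (opp x))).

End Topo.

Definition Bf_polishable (H : PreHilbert) (op : ((H -> H) -> Prop) -> Prop) : Prop :=
  exists tau : ((H -> H) -> Prop) -> Prop,
    polish_group_on (@is_finite_rank H) (@op_add H) (@op_opp H) tau /\
    forall A, borel_on (@is_finite_rank H) tau A <->
              trace_borel (@is_finite_rank H) (@is_bounded_op H) op A.

(* Main.v *)
Require Import Defs.
From Stdlib Require Import Reals List.
From Stdlib Require Import ZArith Lra Lia Classical ClassicalEpsilon FunctionalExtensionality PropExtensionality Cantor.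
Require Import Defs.
Open Scope R_scope.


Definition ustep (c : R) (p : R * R) : R * R :=
  let (a, b) := p in
  if Rle_dec c ((a + b) / 2) then ((a + 2 * b) / 3, b) else (a, (2 * a + b) / 3).

Fixpoint useq (u : nat -> R) (n : nat) : R * R :=
  match n with O => (0, 1) | S k => ustep (u k) (useq u k) end.

Lemma ustep_spec c a b : a < b ->
  a <= fst (ustep c (a, b)) /\ fst (ustep c (a, b)) < snd (ustep c (a, b)) /\ snd (ustep c (a, b)) <= b /\ (c < fst (ustep c (a, b)) \/ snd (ustep c (a, b)) < c).
Proof.
  intros Hab; unfold ustep; destruct (Rle_dec c ((a + b) / 2)); simpl; lra.
Qed.

Lemma useq_lt u n : fst (useq u n) < snd (useq u n).
Proof.
  induction n. simpl; lra.
  change (useq u (S n)) with (ustep (u n) (useq u n)).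
  destruct (useq u n) as [a b] eqn:E; simpl in *.
  destruct (ustep_spec (u n) a b IHn) as (?&?&?&?); tauto.
Qed.

Lemma useq_mono u n k : fst (useq u n) <= fst (useq u (n + k)) /\ snd (useq u (n + k)) <= snd (useq u n).
Proof.
  induction k. rewrite Nat.add_0_r; lra.
  rewrite Nat.add_succ_r. change (useq u (S (n + k))) with (ustep (u (n+k)%nat) (useq u (n+k))).
  pose proof (useq_lt u (n + k)).
  destruct (useq u (n + k)) as [a b] eqn:E; cbn [fst snd] in H, IHk.
  destruct (ustep_spec (u (n+k)%nat) a b H) as (?&?&?&?); lra.
Qed.

Lemma R_not_enum (u : nat -> R) : exists x, forall n, u n <> x.
Proof.
  set (E := fun x => exists n, x = fst (useq u n)).
  assert (Hb : bound E).
  { exists 1. intros x [n ->]. pose proof (useq_mono u 0 n) as [_ H2].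
    pose proof (useq_lt u n). simpl in *. lra. }
  destruct (completeness E Hb) as [l [Hub Hlub]].
  { exists (fst (useq u 0)). exists 0%nat. reflexivity. }
  assert (Hlb : forall n, fst (useq u n) <= l).
  { intros n; apply Hub; exists n; reflexivity. }
  assert (Hrb : forall n, l <= snd (useq u n)).
  { intros n; apply Hlub. intros x [k ->].
    destruct (Nat.le_ge_cases n k).
    - replace k with (n + (k - n))%nat by lia.
      pose proof (useq_mono u n (k - n)); pose proof (useq_lt u (n + (k-n))); lra.
    - replace n with (k + (n - k))%nat by lia.
      pose proof (useq_mono u k (n - k)); pose proof (useq_lt u (k + (n-k))); lra. }
  exists l. intros n Heq.
  pose proof (Hlb (S n)); pose proof (Hrb (S n)).
  change (useq u (S n)) with (ustep (u n) (useq u n)) in *.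
  pose proof (useq_lt u n).
  destruct (useq u n) as [a b] eqn:E'.
  destruct (ustep_spec (u n) a b H1) as (?&?&?&?). lra.
Qed.


Section Desc.
Variable X : Type.
Variable Sx : X -> Prop.
Variable op : (X -> Prop) -> Prop.
Variable dist : X -> X -> R.
Variable d : nat -> X.
Hypothesis Htop : is_topology_on Sx op.
Hypothesis Hd : forall n, Sx (d n).
Hypothesis Hdense : forall U, op U -> (exists x, U x) -> exists n, U (d n).
Hypothesis Hpos : forall x y, Sx x -> Sx y -> 0 <= dist x y.
Hypothesis Hzero : forall x y, Sx x -> Sx y -> (dist x y = 0 <-> x = y).
Hypothesis Hsym : forall x y, Sx x -> Sx y -> dist x y = dist y x.
Hypothesis Htri : forall x y z, Sx x -> Sx y -> Sx z -> dist x z <= dist x y + dist y z.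
Hypothesis Hopen : forall U, op U <-> (subset U Sx /\ forall x, U x -> exists eps, eps > 0 /\
                             forall y, Sx y -> dist x y < eps -> U y).
Hypothesis Hcompl : forall u : nat -> X, (forall n, Sx (u n)) ->
        (forall eps, eps > 0 -> exists N, forall m n, (N <= m)%nat -> (N <= n)%nat ->
            dist (u m) (u n) < eps) ->
        exists l, Sx l /\ forall eps, eps > 0 -> exists N, forall n, (N <= n)%nat ->
            dist (u n) l < eps.

Lemma op_sub U : op U -> forall x, U x -> Sx x.
Proof. intros HU x Hx. exact (proj1 Htop U HU x Hx). Qed.

Lemma op_S : op Sx.
Proof. exact (proj1 (proj2 Htop)). Qed.

Lemma op_inter U V : op U -> op V -> op (fun x => U x /\ V x).
Proof. apply (proj1 (proj2 (proj2 Htop))). Qed.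

Lemma op_union (F : (X -> Prop) -> Prop) : (forall U, F U -> op U) -> op (fun x => exists U, F U /\ U x).
Proof. apply (proj2 (proj2 (proj2 Htop))). Qed.

Lemma op_ext U V : op U -> (forall x, U x <-> V x) -> op V.
Proof.
  intros HU H. replace V with U; auto.
  apply functional_extensionality; intros x; apply propositional_extensionality; auto.
Qed.

Lemma dist_refl x : Sx x -> dist x x = 0.
Proof. intros Hx. apply (proj2 (Hzero x x Hx Hx)). reflexivity. Qed.

Definition ball (x : X) (r : R) : X -> Prop := fun y => Sx y /\ dist x y < r.

Lemma ball_open x r : Sx x -> op (ball x r).
Proof.
  intros Hx. apply Hopen. split. intros y [Hy _]; exact Hy.
  intros y [Hy Hxy]. exists (r - dist x y). split. lra.
  intros z Hz Hyz. split. exact Hz.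
  pose proof (Htri x y z Hx Hy Hz). lra.
Qed.

Lemma open_ball_in U x : op U -> U x -> exists eps, eps > 0 /\ forall y, Sx y -> dist x y < eps -> U y.
Proof. intros HU Hx. apply Hopen in HU. destruct HU as [_ HU]. apply HU; auto. Qed.

Definition nwd (N : X -> Prop) : Prop :=
  forall V, op V -> (exists x, V x) -> exists W, op W /\ (exists x, W x) /\
     (forall x, W x -> V x) /\ forall x, W x -> ~ N x.

Definition meager (M : X -> Prop) : Prop :=
  exists Ns : nat -> X -> Prop, (forall k, nwd (Ns k)) /\ forall x, M x -> exists k, Ns k x.

Lemma meager_sub A B : (forall x, A x -> B x) -> meager B -> meager A.
Proof.
  intros HAB [Ns [H1 H2]]. exists Ns; split; auto.
Qed.

Lemma meager_empty : meager (fun _ => False).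
Proof.
  exists (fun _ _ => False). split. intros k V HV Hne. exists V. repeat split; auto.
  intros x [].
Qed.

Lemma meager_cunion (A : nat -> X -> Prop) : (forall n, meager (A n)) -> meager (fun x => exists n, A n x).
Proof.
  intros HA.
  assert (HN : forall n, { Ns : nat -> X -> Prop | (forall k, nwd (Ns k)) /\ forall x, A n x -> exists k, Ns k x }).
  { intros n. apply constructive_indefinite_description. apply HA. }
  exists (fun k => let (i, j) := of_nat k in proj1_sig (HN i) j).
  split.
  - intros k. destruct (of_nat k) as [i j]. apply (proj1 (proj2_sig (HN i))).
  - intros x [n Hn]. destruct (proj2 (proj2_sig (HN n)) x Hn) as [j Hj].
    exists (to_nat (n, j)). rewrite cancel_of_to. exact Hj.
Qed.

Lemma meager_union2 A B : meager A -> meager B -> meager (fun x => A x \/ B x).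
Proof.
  intros HA HB.
  apply meager_sub with (B := fun x => exists n, (match n with O => A | _ => B end) x).
  - intros x [H|H]. exists O; exact H. exists 1%nat; exact H.
  - apply meager_cunion. intros [|n]; auto.
Qed.

(** Baire category theorem *)
Section BaireSeq.
Variable Ns : nat -> X -> Prop.
Hypothesis HNs : forall k, nwd (Ns k).

Definition Rel (k : nat) (p q : X * R) : Prop :=
  Sx (fst q) /\ snd q > 0 /\ snd q <= snd p / 2 /\
  (forall y, Sx y -> dist (fst q) y < 2 * snd q -> dist (fst p) y < snd p) /\
  (forall y, Sx y -> dist (fst q) y < 2 * snd q -> ~ Ns k y).

Lemma step_ex k p : Sx (fst p) -> snd p > 0 -> exists q, Rel k p q.
Proof.
  destruct p as [x r]; simpl. intros Hx Hr.
  destruct (HNs k (ball x r) (ball_open x r Hx)) as [W [HW [[z Hz] [HWV HWN]]]].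
  { exists x. split; auto. rewrite dist_refl; auto. }
  destruct (open_ball_in W z HW Hz) as [eps [Heps Hball]].
  assert (Hzs : Sx z) by (apply (op_sub W HW z Hz)).
  exists (z, Rmin eps r / 2). unfold Rel; simpl.
  pose proof (Rmin_l eps r); pose proof (Rmin_r eps r).
  assert (Rmin eps r > 0) by (apply Rmin_glb_lt; lra).
  repeat split; auto; try lra.
  - intros y Hy Hd'. destruct (HWV y (Hball y Hy ltac:(lra))) as [_ H']. exact H'.
  - intros y Hy Hd'. apply HWN. apply Hball; auto; lra.
Qed.

Lemma step_ex' k p : exists q, (Sx (fst p) /\ snd p > 0) -> Rel k p q.
Proof.
  destruct (classic (Sx (fst p) /\ snd p > 0)) as [[H1 H2]|Hn].
  - destruct (step_ex k p H1 H2) as [q Hq]. exists q; auto.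
  - exists p. intros H; contradiction.
Qed.

Definition nxt (k : nat) (p : X * R) : X * R :=
  proj1_sig (constructive_indefinite_description _ (step_ex' k p)).

Lemma nxt_spec k p : Sx (fst p) -> snd p > 0 -> Rel k p (nxt k p).
Proof.
  intros H1 H2. unfold nxt. destruct (constructive_indefinite_description _ _) as [q Hq]; simpl. auto.
Qed.

Fixpoint bseq (p0 : X * R) (n : nat) : X * R :=
  match n with O => p0 | S k => nxt k (bseq p0 k) end.

Lemma baire_main V : op V -> (exists x, V x) -> exists l, V l /\ forall k, ~ Ns k l.
Proof.
  intros HV [x0 Hx0].
  assert (Hx0s : Sx x0) by (apply (op_sub V HV x0 Hx0)).
  destruct (open_ball_in V x0 HV Hx0) as [eps0 [Heps0 HV0]].
  set (p0 := (x0, eps0 / 2)).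
  set (x := fun n => fst (bseq p0 n)).
  set (r := fun n => snd (bseq p0 n)).
  assert (Hinv : forall n, Sx (x n) /\ r n > 0).
  { induction n. unfold x, r; simpl; split; auto; lra.
    destruct IHn as [H1 H2].
    pose proof (nxt_spec n (bseq p0 n) H1 H2) as [? [? _]].
    unfold x, r; simpl; auto. }
  assert (Hrel : forall n, Rel n (bseq p0 n) (bseq p0 (S n))).
  { intros n. simpl. apply nxt_spec; apply Hinv. }
  assert (Hnest : forall j k y, Sx y -> dist (x (k + j)%nat) y < 2 * r (k + j)%nat -> dist (x k) y < 2 * r k).
  { induction j; intros k y Hy H.
    - rewrite Nat.add_0_r in H; auto.
    - apply IHj; auto. rewrite Nat.add_succ_r in H.
      destruct (Hrel (k + j)%nat) as [_ [_ [_ [H4 _]]]].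
      pose proof (H4 y Hy H). pose proof (proj2 (Hinv (k+j)%nat)).
      unfold x, r in *. lra. }
  assert (Hdist : forall k n, (k <= n)%nat -> dist (x k) (x n) < r k).
  { intros k n Hkn. destruct (Nat.eq_dec k n) as [->|Hne].
    - rewrite dist_refl by apply Hinv. apply Hinv.
    - destruct (Hrel k) as [_ [_ [_ [H4 _]]]].
      apply H4. apply Hinv.
      replace n with (S k + (n - S k))%nat by lia.
      apply (Hnest (n - S k)%nat (S k) (x (S k + (n - S k))%nat)). apply Hinv.
      rewrite dist_refl by apply Hinv. pose proof (proj2 (Hinv (S k + (n - S k))%nat)). lra. }
  assert (Hr : forall n, r n <= eps0 / 2 * (/ 2) ^ n).
  { induction n. unfold r; simpl; lra.
    destruct (Hrel n) as [_ [_ [H3 _]]].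
    change (r (S n) <= r n / 2) in H3. simpl. lra. }
  destruct (Hcompl x) as [l [Hl Hlim]].
  { intros n; apply Hinv. }
  { intros eps Heps.
    destruct (pow_lt_1_zero (/ 2) ltac:(rewrite Rabs_pos_eq; lra) (eps / eps0)) as [N HN].
    { apply Rdiv_lt_0_compat; lra. }
    exists N. intros m n Hm Hn.
    pose proof (HN N (Nat.le_refl N)) as HNN. rewrite Rabs_pos_eq in HNN by (apply pow_le; lra).
    pose proof (Hr N).
    assert (r N < eps / 2).
    { apply Rmult_lt_compat_l with (r := eps0) in HNN; [|lra].
      replace (eps0 * (eps / eps0)) with eps in HNN by (field; lra). lra. }
    pose proof (Hdist N m Hm); pose proof (Hdist N n Hn).
    pose proof (Htri (x m) (x N) (x n) (proj1 (Hinv m)) (proj1 (Hinv N)) (proj1 (Hinv n))).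
    rewrite (Hsym (x m) (x N)) in * by apply Hinv. lra. }
  assert (Hlk : forall k, dist (x k) l < 2 * r k).
  { intros k. destruct (Rle_dec (dist (x k) l) (r k)) as [Hle|Hgt].
    - pose proof (proj2 (Hinv k)); lra.
    - exfalso. destruct (Hlim (dist (x k) l - r k) ltac:(lra)) as [N HN].
      pose proof (HN (Nat.max k N) (Nat.le_max_r k N)).
      pose proof (Hdist k (Nat.max k N) (Nat.le_max_l k N)).
      pose proof (Htri (x k) (x (Nat.max k N)) l (proj1 (Hinv k)) (proj1 (Hinv _)) Hl). lra. }
  exists l. split.
  - apply HV0; auto. pose proof (Hlk 0%nat). unfold x, r in H; simpl in H. lra.
  - intros k. destruct (Hrel k) as [_ [_ [_ [_ H5]]]]. apply H5; auto. apply Hlk.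
Qed.
End BaireSeq.

Lemma baire V M : op V -> (exists x, V x) -> meager M -> exists x, V x /\ ~ M x.
Proof.
  intros HV Hne [Ns [HNs HM]].
  destruct (baire_main Ns HNs V HV Hne) as [l [Hl Hk]].
  exists l. split; auto. intros HMl. destruct (HM l HMl) as [k Hk']. apply (Hk k Hk').
Qed.

(** Baire property *)
Definition BP (A : X -> Prop) : Prop :=
  subset A Sx /\ exists U, op U /\ meager (fun x => A x /\ ~ U x) /\ meager (fun x => U x /\ ~ A x).

Lemma BP_open U : op U -> BP U.
Proof.
  intros HU. split. intros x; apply (op_sub U HU). exists U. split; auto.
  split; apply meager_sub with (B := fun _ => False); try apply meager_empty; tauto.
Qed.

Lemma BP_sigma : sigma_algebra_on Sx BP.
Proof.
  split; [|split; [|split]].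
  - intros A [H _]; exact H.
  - apply BP_open, op_S.
  - intros A [HAS [U [HU [H1 H2]]]].
    set (W := fun x => exists V, (op V /\ forall y, V y -> ~ U y) /\ V x).
    assert (HW : op W) by (apply op_union; intros V [HV _]; exact HV).
    split. intros x [Hx _]; exact Hx.
    exists W. split; auto. split.
    + apply meager_sub with (B := fun x => (U x /\ ~ A x) \/ (Sx x /\ ~ U x /\ ~ W x)).
      { intros x [[Hx HA] HWx]. destruct (classic (U x)); [left|right]; tauto. }
      apply meager_union2; auto.
      exists (fun _ x => Sx x /\ ~ U x /\ ~ W x). split; [|intros x Hx; exists O; exact Hx].
      intros k V HV [v Hv].
      destruct (classic (exists y, V y /\ U y)) as [[y [Hy1 Hy2]]|Hno].
      * exists (fun x => V x /\ U x). split. apply op_inter; auto.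
        split. exists y; auto. split. tauto. tauto.
      * exists V. split; auto. split. exists v; auto. split; auto.
        intros x Hx [_ [_ HWx]]. apply HWx. exists V. split; auto.
        split; auto. intros z Hz HUz. apply Hno. exists z; auto.
    + apply meager_sub with (B := fun x => A x /\ ~ U x).
      { intros x [HWx Hn]. destruct HWx as [V [[HV HVU] HVx]].
        assert (Sx x) by (apply (op_sub V HV x HVx)).
        split. destruct (classic (A x)); auto. exfalso; apply Hn; auto. apply HVU; auto. }
      auto.
  - intros A HA.
    assert (HU : forall n, { U | op U /\ meager (fun x => A n x /\ ~ U x) /\ meager (fun x => U x /\ ~ A n x)}).
    { intros n. apply constructive_indefinite_description. apply (proj2 (HA n)). }
    split. intros x [n Hn]. apply (proj1 (HA n) x Hn).
    exists (fun x => exists V, (exists n, V = proj1_sig (HU n)) /\ V x). split; [|split].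
    + apply op_union. intros V [n ->]. apply (proj2_sig (HU n)).
    + apply meager_sub with (B := fun x => exists n, A n x /\ ~ proj1_sig (HU n) x).
      { intros x [[n Hn] Hno]. exists n. split; auto. intros Hx. apply Hno.
        exists (proj1_sig (HU n)); split; eauto. }
      apply meager_cunion. intros n. apply (proj2_sig (HU n)).
    + apply meager_sub with (B := fun x => exists n, proj1_sig (HU n) x /\ ~ A n x).
      { intros x [[V [[n ->] Hx]] Hno]. exists n. split; auto. intros Hx'; apply Hno; eauto. }
      apply meager_cunion. intros n. apply (proj2_sig (HU n)).
Qed.

Lemma borel_BP A : borel_on Sx op A -> BP A.
Proof. intros HA. apply HA. apply BP_sigma. apply BP_open. Qed.

Lemma main_desc (A : nat -> X -> Prop) :
  (forall m, BP (A m)) -> (forall x, Sx x -> exists m, A m x) -> (exists x, Sx x) ->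
  exists m U u0, op U /\ U u0 /\ meager (fun x => U x /\ ~ A m x).
Proof.
  intros HBP Hcov Hne.
  destruct (classic (exists m, ~ meager (A m))) as [[m Hm]|Hall].
  - destruct (HBP m) as [_ [U [HU [H1 H2]]]].
    destruct (classic (exists u, U u)) as [[u Hu]|Hno].
    + exists m, U, u. auto.
    + exfalso. apply Hm. apply meager_sub with (B := fun x => A m x /\ ~ U x); auto.
      intros x Hx. split; auto. intros Hu; apply Hno; eauto.
  - exfalso.
    assert (HM : meager (fun x => exists m, A m x)).
    { apply meager_cunion. intros m. apply NNPP. intros Hn. apply Hall; eauto. }
    destruct (baire Sx _ op_S Hne HM) as [x [Hx Hnx]].
    apply Hnx. apply Hcov; auto.
Qed.

Section Trans.
Variable add : X -> X -> X.
Variable opp : X -> X.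
Hypothesis Hadd_S : forall a b, Sx a -> Sx b -> Sx (add a b).
Hypothesis Hopp_S : forall a, Sx a -> Sx (opp a).
Hypothesis Hc1 : forall y c, Sx y -> Sx c -> add (add y (opp c)) c = y.
Hypothesis Hc2 : forall y c, Sx y -> Sx c -> add (add y c) (opp c) = y.
Hypothesis Hcont : forall W, op W -> prod_open op (fun p => Sx (fst p) /\ Sx (snd p) /\ W (add (fst p) (snd p))).

Lemma trans_open W c : op W -> Sx c -> op (fun y => Sx y /\ W (add y c)).
Proof.
  intros HW Hc.
  apply op_ext with (U := fun x => exists U, (op U /\ forall y, U y -> Sx y /\ W (add y c)) /\ U x).
  - apply op_union. intros U [HU _]; exact HU.
  - intros x. split.
    + intros [U [[_ HU] Hx]]. auto.
    + intros [Hx HWx]. destruct (Hcont W HW (x, c)) as [U [V [HU [HV [HUx [HVc Hall]]]]]].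
      { simpl; auto. }
      exists U. split; auto. split; auto. intros y Hy. destruct (Hall y c Hy HVc) as [? [? ?]]. simpl in *; auto.
Qed.

Lemma nwd_pre N c : nwd N -> Sx c -> nwd (fun y => Sx y /\ N (add y c)).
Proof.
  intros HN Hc V HV [v Hv].
  assert (Hvs : Sx v) by (apply (op_sub V HV v Hv)).
  destruct (HN (fun z => Sx z /\ V (add z (opp c)))) as [W [HW [[w Hw] [HWV HWN]]]].
  { apply trans_open; auto. }
  { exists (add v c). split; auto. rewrite Hc2; auto. }
  assert (Hws : Sx w) by (apply (op_sub W HW w Hw)).
  exists (fun y => Sx y /\ W (add y c)). split; [apply trans_open; auto|].
  split. { exists (add w (opp c)). split; auto. rewrite Hc1; auto. }
  split.
  - intros y [Hy HWy]. destruct (HWV _ HWy) as [_ H]. rewrite Hc2 in H; auto.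
  - intros y [Hy HWy] [_ HNy]. apply (HWN _ HWy HNy).
Qed.

Lemma meager_pre M c : meager M -> Sx c -> meager (fun y => Sx y /\ M (add y c)).
Proof.
  intros [Ns [HNs HM]] Hc. exists (fun k y => Sx y /\ Ns k (add y c)). split.
  - intros k. apply nwd_pre; auto.
  - intros y [Hy HMy]. destruct (HM _ HMy) as [k Hk]. exists k; auto.
Qed.

Lemma small_inv_lt e : e > 0 -> exists k, / INR (S k) < e.
Proof.
  intros He. destruct (archimed (/ e)) as [H1 _].
  assert (Hup : (0 <= up (/ e))%Z).
  { apply le_IZR. pose proof (Rinv_0_lt_compat e He). simpl. lra. }
  exists (Z.to_nat (up (/ e))). rewrite S_INR, INR_IZR_INZ, Z2Nat.id by lia.
  pose proof (Rinv_0_lt_compat e He).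
  apply Rlt_le_trans with (/ (/ e)).
  - apply Rinv_lt_contravar. apply Rmult_lt_0_compat; lra. lra.
  - rewrite Rinv_inv. lra.
Qed.

Lemma pigeon (A : X -> Prop) U u0 (T : R -> X) :
  op U -> U u0 -> meager (fun x => U x /\ ~ A x) -> (forall t, Sx (T t)) ->
  (forall t s y, t <> s -> Sx y -> A (add y (opp (T t))) -> A (add y (opp (T s))) -> False) -> False.
Proof.
  intros HU Hu0 HM HT Hbad.
  assert (Hu0s : Sx u0) by (apply (op_sub U HU u0 Hu0)).
  set (O := fun t y => Sx y /\ U (add y (opp (T t)))).
  assert (HO : forall t, op (O t)) by (intros t; apply trans_open; auto).
  assert (HB : forall t, exists p : nat * nat, forall y, Sx y -> dist (d (fst p)) y < / INR (S (snd p)) -> O t y).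
  { intros t. destruct (open_ball_in (O t) (add u0 (T t)) (HO t)) as [eps [Heps Hb]].
    { split; auto. rewrite Hc2; auto. }
    assert (Hz : Sx (add u0 (T t))) by auto.
    destruct (Hdense (ball (add u0 (T t)) (eps / 2))) as [i Hi].
    { apply ball_open; auto. }
    { exists (add u0 (T t)). split; auto. rewrite dist_refl; auto; lra. }
    destruct (small_inv_lt (eps / 2)) as [k Hk]. lra.
    exists (i, k). cbn [fst snd]. intros y Hy Hdy. apply Hb; auto.
    destruct Hi as [_ Hi].
    pose proof (Htri _ (d i) y Hz (Hd i) Hy). lra. }
  set (g := fun t => to_nat (proj1_sig (constructive_indefinite_description _ (HB t)))).
  assert (Hg : forall t y, Sx y -> dist (d (fst (of_nat (g t)))) y < / INR (S (snd (of_nat (g t)))) -> O t y).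
  { intros t. unfold g. rewrite cancel_of_to. destruct (constructive_indefinite_description _ _) as [p Hp]; simpl; auto. }
  assert (Hni : exists t s, t <> s /\ g t = g s).
  { apply NNPP. intros Hinj.
    assert (Hu : forall n, exists t, (exists t', g t' = n) -> g t = n).
    { intros n. destruct (classic (exists t', g t' = n)) as [[t' Ht']|Hn].
      - exists t'; auto.
      - exists 0; intros H; contradiction. }
    set (u := fun n => proj1_sig (constructive_indefinite_description _ (Hu n))).
    destruct (R_not_enum u) as [x Hx]. apply (Hx (g x)).
    unfold u. destruct (constructive_indefinite_description _ _) as [t Ht]; simpl.
    specialize (Ht (ex_intro _ x eq_refl)).
    apply NNPP. intros Hne. apply Hinj. exists t, x. auto. }
  destruct Hni as [t [s [Hts Hgts]]].
  set (i := fst (of_nat (g t))). set (k := snd (of_nat (g t))).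
  set (Mt := fun t y => Sx y /\ (fun x => U x /\ ~ A x) (add y (opp (T t)))).
  destruct (baire (ball (d i) (/ INR (S k))) (fun y => Mt t y \/ Mt s y)) as [y [[Hy Hdy] Hny]].
  - apply ball_open; auto.
  - exists (d i). split; auto. rewrite dist_refl; auto. apply Rinv_0_lt_compat. apply lt_0_INR; lia.
  - apply meager_union2; apply meager_pre; auto.
  - pose proof (Hg t y Hy Hdy) as [_ HOt].
    assert (Hdy' : dist (d (fst (of_nat (g s)))) y < / INR (S (snd (of_nat (g s))))).
    { rewrite <- Hgts. exact Hdy. }
    pose proof (Hg s y Hy Hdy') as [_ HOs].
    apply (Hbad t s y Hts Hy).
    + apply NNPP; intros Hn. apply Hny. left. split; auto.
    + apply NNPP; intros Hn. apply Hny. right. split; auto.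
Qed.
End Trans.
End Desc.

Fixpoint rsum (n : nat) (f : nat -> R) : R :=
  match n with O => 0 | S k => rsum k f + f k end.
Definition mmul (K : nat) (A B : nat -> nat -> R) : nat -> nat -> R :=
  fun i j => rsum K (fun l => A i l * B l j).
Definition near_id (m : nat) (X : nat -> nat -> R) : Prop :=
  rsum m (fun i => rsum m (fun j => Rabs (X i j - if Nat.eqb i j then 1 else 0))) < / 2.


Lemma rsum_ext n f g : (forall i, (i < n)%nat -> f i = g i) -> rsum n f = rsum n g.
Proof. induction n; intros Hfg; simpl; auto. rewrite IHn, Hfg; auto. Qed.

Lemma rsum_le n f g : (forall i, (i < n)%nat -> f i <= g i) -> rsum n f <= rsum n g.
Proof. induction n; intros Hfg; simpl. lra. pose proof (Hfg n ltac:(lia)). pose proof (IHn ltac:(auto)). lra. Qed.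

Lemma rsum_plus n f g : rsum n (fun i => f i + g i) = rsum n f + rsum n g.
Proof. induction n; simpl. ring. rewrite IHn; ring. Qed.

Lemma rsum_minus n f g : rsum n (fun i => f i - g i) = rsum n f - rsum n g.
Proof. induction n; simpl. ring. rewrite IHn; ring. Qed.

Lemma rsum_scal n c f : rsum n (fun i => c * f i) = c * rsum n f.
Proof. induction n; simpl. ring. rewrite IHn; ring. Qed.

Lemma rsum_scal_r n c f : rsum n (fun i => f i * c) = rsum n f * c.
Proof. induction n; simpl. ring. rewrite IHn; ring. Qed.

Lemma Rabs_rsum n f : Rabs (rsum n f) <= rsum n (fun i => Rabs (f i)).
Proof. induction n; simpl. rewrite Rabs_R0; lra. eapply Rle_trans. apply Rabs_triang. lra. Qed.

Lemma rsum_nonneg n f : (forall i, (i < n)%nat -> 0 <= f i) -> 0 <= rsum n f.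
Proof. induction n; intros Hf; simpl. lra. pose proof (Hf n ltac:(lia)). pose proof (IHn ltac:(auto)). lra. Qed.

Lemma rsum_shift n f : rsum (S n) f = f 0%nat + rsum n (fun i => f (S i)).
Proof. induction n; simpl in *. ring. rewrite IHn. ring. Qed.

Lemma rsum_split n k f : rsum (n + k) f = rsum n f + rsum k (fun i => f (n + i)%nat).
Proof. induction k; simpl. rewrite Nat.add_0_r; ring. rewrite Nat.add_succ_r. simpl. rewrite IHk; ring. Qed.


Lemma Ceq (a b : C) : Cre a = Cre b -> Cim a = Cim b -> a = b.
Proof. destruct a, b; simpl; intros; subst; reflexivity. Qed.

Section Hilb.
Variable H : PreHilbert.
Hypothesis Hassoc : forall x y z : H, hadd x (hadd y z) = hadd (hadd x y) z.
Hypothesis Hcomm : forall x y : H, hadd x y = hadd y x.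
Hypothesis Hzero : forall x : H, hadd x hzero = x.
Hypothesis Hoppr : forall x : H, hadd x (hopp x) = hzero.
Hypothesis Hscal1 : forall x : H, hscal C1 x = x.
Hypothesis Hscalmul : forall a b (x : H), hscal (Cmul a b) x = hscal a (hscal b x).
Hypothesis Hscaladdv : forall a (x y : H), hscal a (hadd x y) = hadd (hscal a x) (hscal a y).
Hypothesis Hscaladdc : forall a b (x : H), hscal (Cadd a b) x = hadd (hscal a x) (hscal b x).
Hypothesis Hinaddl : forall x y z : H, hinner (hadd x y) z = Cadd (hinner x z) (hinner y z).
Hypothesis Hinscall : forall a (x y : H), hinner (hscal a x) y = Cmul a (hinner x y).
Hypothesis Hinconj : forall x y : H, hinner y x = Cconj (hinner x y).
Hypothesis Hinpos : forall x : H, 0 <= Cre (hinner x x).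
Hypothesis Hindef : forall x : H, hinner x x = C0 -> x = hzero.

Lemma zero_l (x : H) : hadd hzero x = x.
Proof. rewrite Hcomm; apply Hzero. Qed.

Lemma oppl (x : H) : hadd (hopp x) x = hzero.
Proof. rewrite Hcomm; apply Hoppr. Qed.

Lemma add_cancel (x y z : H) : hadd x y = hadd x z -> y = z.
Proof.
  intros E. rewrite <- (zero_l y), <- (zero_l z), <- (oppl x), <- !Hassoc, E. reflexivity.
Qed.

Lemma self_zero (s : H) : hadd s s = s -> s = hzero.
Proof. intros E. apply (add_cancel s). rewrite E, Hzero. reflexivity. Qed.

Lemma scal0 (x : H) : hscal C0 x = hzero.
Proof.
  apply self_zero. rewrite <- Hscaladdc. f_equal. apply Ceq; simpl; lra.
Qed.

Lemma scal_zero a : hscal a (@hzero H) = hzero.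
Proof. apply self_zero. rewrite <- Hscaladdv, Hzero. reflexivity. Qed.

Definition Cr (r : R) : C := mkC r 0.

Lemma opp_unique (x m : H) : hadd x m = hzero -> hopp x = m.
Proof.
  intros E. rewrite <- (Hzero (hopp x)), <- E, Hassoc, oppl, zero_l. reflexivity.
Qed.

Lemma opp_scal (x : H) : hopp x = hscal (Cr (-1)) x.
Proof.
  apply opp_unique. rewrite <- (Hscal1 x) at 1. rewrite <- Hscaladdc.
  replace (Cadd C1 (Cr (-1))) with C0 by (apply Ceq; simpl; lra). apply scal0.
Qed.

Lemma add_swap4 (a b c d : H) : hadd (hadd a b) (hadd c d) = hadd (hadd a c) (hadd b d).
Proof.
  rewrite <- !Hassoc. f_equal. rewrite !Hassoc. f_equal. apply Hcomm.
Qed.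

Lemma opp_add (x y : H) : hopp (hadd x y) = hadd (hopp x) (hopp y).
Proof. rewrite !opp_scal. apply Hscaladdv. Qed.

Lemma inner0l (y : H) : hinner hzero y = C0.
Proof.
  assert (E : hinner (@hzero H) y = Cadd (hinner hzero y) (hinner hzero y)).
  { rewrite <- Hinaddl, Hzero. reflexivity. }
  destruct (hinner hzero y) as [a b]. injection E. intros. apply Ceq; simpl; lra.
Qed.

Lemma Cconj_add a b : Cconj (Cadd a b) = Cadd (Cconj a) (Cconj b).
Proof. apply Ceq; simpl; lra. Qed.
Lemma Cconj_invol a : Cconj (Cconj a) = a.
Proof. apply Ceq; simpl; lra. Qed.

Lemma inaddr (x y z : H) : hinner x (hadd y z) = Cadd (hinner x y) (hinner x z).
Proof.
  rewrite Hinconj, Hinaddl, Cconj_add, <- !Hinconj. reflexivity.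
Qed.

Lemma inscalr a (x y : H) : hinner x (hscal a y) = Cmul (Cconj a) (hinner x y).
Proof.
  rewrite Hinconj, Hinscall, (Hinconj x y). apply Ceq; simpl; lra.
Qed.

Lemma im_self (x : H) : Cim (hinner x x) = 0.
Proof. pose proof (f_equal Cim (Hinconj x x)). simpl in H0. lra. Qed.

Definition Re (x y : H) : R := Cre (hinner x y).

Lemma Re_addl x y z : Re (hadd x y) z = Re x z + Re y z.
Proof. unfold Re; rewrite Hinaddl; reflexivity. Qed.
Lemma Re_addr x y z : Re x (hadd y z) = Re x y + Re x z.
Proof. unfold Re; rewrite inaddr; reflexivity. Qed.
Lemma Re_sym x y : Re x y = Re y x.
Proof. unfold Re; rewrite Hinconj; reflexivity. Qed.
Lemma Re_scall r x y : Re (hscal (Cr r) x) y = r * Re x y.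
Proof. unfold Re; rewrite Hinscall; simpl; ring. Qed.
Lemma Re_scalr r x y : Re x (hscal (Cr r) y) = r * Re x y.
Proof. unfold Re; rewrite inscalr; simpl; ring. Qed.
Lemma Re_oppl x y : Re (hopp x) y = - Re x y.
Proof. rewrite opp_scal, Re_scall; ring. Qed.
Lemma Re_oppr x y : Re x (hopp y) = - Re x y.
Proof. rewrite opp_scal, Re_scalr; ring. Qed.
Lemma Re_subl x y z : Re (hsub H x y) z = Re x z - Re y z.
Proof. unfold hsub. rewrite Re_addl, Re_oppl; ring. Qed.

Lemma hnorm_sq x : hnorm H x * hnorm H x = Re x x.
Proof. unfold hnorm, Re. apply sqrt_sqrt, Hinpos. Qed.

Lemma hnorm_pos x : 0 <= hnorm H x.
Proof. apply sqrt_pos. Qed.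

Lemma CS_sq u v : Re u v * Re u v <= Re u u * Re v v.
Proof.
  assert (Hq : forall t, 0 <= Re u u + 2 * t * Re u v + t * t * Re v v).
  { intros t. pose proof (Hinpos (hadd u (hscal (Cr t) v))) as P.
    change (0 <= Re (hadd u (hscal (Cr t) v)) (hadd u (hscal (Cr t) v))) in P.
    rewrite Re_addl, !Re_addr, !Re_scall, !Re_scalr, (Re_sym v u) in P. lra. }
  pose proof (Hinpos v) as Hv. change (0 <= Re v v) in Hv.
  pose proof (Hinpos u) as Hu. change (0 <= Re u u) in Hu.
  destruct (Req_dec (Re v v) 0) as [E|E].
  - destruct (Req_dec (Re u v) 0) as [E2|E2].
    + rewrite E2; nra.
    + exfalso. pose proof (Hq (- (Re u u + 1) / (2 * Re u v))) as P.
      rewrite E in P.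
      replace (2 * (- (Re u u + 1) / (2 * Re u v)) * Re u v) with (- (Re u u + 1)) in P by (field; auto).
      lra.
  - pose proof (Hq (- Re u v / Re v v)) as P.
    assert (Hvp : 0 < Re v v) by lra.
    replace (Re u u + 2 * (- Re u v / Re v v) * Re u v + - Re u v / Re v v * (- Re u v / Re v v) * Re v v)
      with (Re u u - Re u v * Re u v / Re v v) in P by (field; lra).
    apply Rmult_le_compat_r with (r := Re v v) in P; [|lra].
    replace ((Re u u - Re u v * Re u v / Re v v) * Re v v) with (Re u u * Re v v - Re u v * Re u v) in P by (field; lra).
    lra.
Qed.

Lemma CS u v : Rabs (Re u v) <= hnorm H u * hnorm H v.
Proof.
  apply Rsqr_incr_0_var; [|apply Rmult_le_pos; apply hnorm_pos].
  rewrite <- Rsqr_abs. unfold Rsqr.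
  replace (hnorm H u * hnorm H v * (hnorm H u * hnorm H v)) with
    ((hnorm H u * hnorm H u) * (hnorm H v * hnorm H v)) by ring.
  rewrite !hnorm_sq. apply CS_sq.
Qed.

Definition Ci : C := mkC 0 1.

Lemma Im_as_Re u v : Cim (hinner u v) = Re u (hscal Ci v).
Proof. unfold Re. rewrite inscalr. simpl. ring. Qed.

Lemma hnorm_scal c v : hnorm H (hscal c v) = sqrt (Cre c * Cre c + Cim c * Cim c) * hnorm H v.
Proof.
  unfold hnorm. rewrite <- sqrt_mult_alt by nra. f_equal.
  rewrite Hinscall, inscalr. pose proof (im_self v). simpl. rewrite H0. ring.
Qed.

Lemma CS_im u v : Rabs (Cim (hinner u v)) <= hnorm H u * hnorm H v.
Proof.
  rewrite Im_as_Re. replace (hnorm H v) with (hnorm H (hscal Ci v)). apply CS.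
  rewrite hnorm_scal. simpl. replace (0 * 0 + 1 * 1) with 1 by ring. rewrite sqrt_1; ring.
Qed.

Lemma sqrt_le_sum a b : sqrt (a * a + b * b) <= Rabs a + Rabs b.
Proof.
  rewrite <- (sqrt_Rsqr (Rabs a + Rabs b)) by (pose proof (Rabs_pos a); pose proof (Rabs_pos b); lra).
  apply sqrt_le_1_alt. unfold Rsqr.
  pose proof (Rabs_pos a); pose proof (Rabs_pos b).
  replace (a * a) with (Rabs a * Rabs a) by (rewrite <- Rabs_mult; apply Rabs_pos_eq; nra).
  replace (b * b) with (Rabs b * Rabs b) by (rewrite <- Rabs_mult; apply Rabs_pos_eq; nra).
  nra.
Qed.

Lemma hnorm_scal_le c v : hnorm H (hscal c v) <= (Rabs (Cre c) + Rabs (Cim c)) * hnorm H v.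
Proof.
  rewrite hnorm_scal. apply Rmult_le_compat_r. apply hnorm_pos. apply sqrt_le_sum.
Qed.

Lemma hnorm_opp v : hnorm H (hopp v) = hnorm H v.
Proof.
  rewrite opp_scal, hnorm_scal. simpl. replace (-1 * -1 + 0 * 0) with 1 by ring. rewrite sqrt_1; ring.
Qed.

Lemma triangle x y : hnorm H (hadd x y) <= hnorm H x + hnorm H y.
Proof.
  pose proof (hnorm_pos x); pose proof (hnorm_pos y).
  apply Rsqr_incr_0_var; [|lra]. unfold Rsqr.
  rewrite hnorm_sq, Re_addl, !Re_addr, (Re_sym y x).
  pose proof (hnorm_sq x); pose proof (hnorm_sq y).
  pose proof (CS x y). pose proof (Rle_abs (Re x y)). nra.
Qed.

Lemma lincomb_nil_r cs : lincomb H cs nil = hzero.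
Proof. destruct cs; reflexivity. Qed.

Lemma lincomb_pad cs vs : exists cs', length cs' = length vs /\ lincomb H cs' vs = lincomb H cs vs.
Proof.
  revert cs; induction vs as [|v vs IH]; intros cs.
  - exists nil. split; auto. rewrite !lincomb_nil_r; reflexivity.
  - destruct cs as [|c cs].
    + destruct (IH nil) as [cs' [Hl He]]. exists (C0 :: cs'). simpl. split; auto.
      rewrite He, scal0. simpl. apply zero_l.
    + destruct (IH cs) as [cs' [Hl He]]. exists (c :: cs'). simpl. split; auto. rewrite He; reflexivity.
Qed.

Lemma lincomb_app cs ds vs ws : length cs = length vs ->
  lincomb H (cs ++ ds) (vs ++ ws) = hadd (lincomb H cs vs) (lincomb H ds ws).
Proof.
  revert cs; induction vs as [|v vs IH]; intros cs Hl.
  - destruct cs; [|discriminate]. simpl. rewrite zero_l; reflexivity.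
  - destruct cs as [|c cs]; [discriminate|]. simpl in *. rewrite IH by lia. apply Hassoc.
Qed.

Lemma opp_zero : hopp (@hzero H) = hzero.
Proof. rewrite opp_scal; apply scal_zero. Qed.

Lemma lincomb_opp cs vs : hopp (lincomb H cs vs) = lincomb H (map (Cmul (Cr (-1))) cs) vs.
Proof.
  revert vs; induction cs as [|c cs IH]; intros vs.
  - simpl. apply opp_zero.
  - destruct vs as [|v vs]. simpl; apply opp_zero.
    simpl. rewrite opp_add, IH, (opp_scal (hscal c v)), <- Hscalmul. reflexivity.
Qed.

Lemma span_add vs ws x y : in_span H vs x -> in_span H ws y -> in_span H (vs ++ ws) (hadd x y).
Proof.
  intros [cs ->] [ds ->]. destruct (lincomb_pad cs vs) as [cs' [Hl He]].
  exists (cs' ++ ds). rewrite lincomb_app, He; auto.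
Qed.

Lemma span_opp vs x : in_span H vs x -> in_span H vs (hopp x).
Proof. intros [cs ->]. eexists. apply lincomb_opp. Qed.

Lemma fr_add S T : is_finite_rank H S -> is_finite_rank H T -> is_finite_rank H (op_add H S T).
Proof.
  intros [[[SL1 SL2] [MS HMS]] [vs Hvs]] [[[TL1 TL2] [MT HMT]] [ws Hws]].
  unfold op_add. split; [split; [split|]|].
  - intros x y. rewrite SL1, TL1. apply add_swap4.
  - intros a x. rewrite SL2, TL2, Hscaladdv. reflexivity.
  - exists (MS + MT). intros x. eapply Rle_trans. apply triangle.
    pose proof (HMS x); pose proof (HMT x). lra.
  - exists (vs ++ ws). intros x. apply span_add; auto.
Qed.

Lemma fr_opp S : is_finite_rank H S -> is_finite_rank H (op_opp H S).
Proof.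
  intros [[[SL1 SL2] [MS HMS]] [vs Hvs]]. unfold op_opp. split; [split; [split|]|].
  - intros x y. rewrite SL1. apply opp_add.
  - intros a x. rewrite SL2, !opp_scal, <- !Hscalmul. f_equal. apply Ceq; simpl; ring.
  - exists MS. intros x. rewrite hnorm_opp. auto.
  - exists vs. intros x. apply span_opp; auto.
Qed.

Lemma op_cancel1 (y c : H -> H) : op_add H (op_add H y (op_opp H c)) c = y.
Proof.
  apply functional_extensionality; intros x. unfold op_add, op_opp.
  rewrite <- Hassoc, oppl, Hzero. reflexivity.
Qed.

Lemma op_cancel2 (y c : H -> H) : op_add H (op_add H y c) (op_opp H c) = y.
Proof.
  apply functional_extensionality; intros x. unfold op_add, op_opp.
  rewrite <- Hassoc, Hoppr, Hzero. reflexivity.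
Qed.

Definition ON (es : list H) : Prop :=
  forall i j, (i < length es)%nat -> (j < length es)%nat ->
    hinner (nth i es hzero) (nth j es hzero) = if Nat.eqb i j then C1 else C0.

Lemma inner_lincomb_orth cs vs y : (forall i, (i < length vs)%nat -> hinner (nth i vs hzero) y = C0) ->
  hinner (lincomb H cs vs) y = C0.
Proof.
  revert cs; induction vs as [|v vs IH]; intros cs Hv.
  - rewrite lincomb_nil_r; apply inner0l.
  - destruct cs as [|c cs]. simpl; apply inner0l.
    simpl. rewrite Hinaddl, Hinscall, IH.
    + pose proof (Hv 0%nat ltac:(simpl; lia)) as H0; simpl in H0; rewrite H0. apply Ceq; simpl; ring.
    + intros i Hi. apply (Hv (S i)). simpl; lia.
Qed.

Lemma inner_lincomb_ON cs es j : ON es -> length cs = length es -> (j < length es)%nat ->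
  hinner (lincomb H cs es) (nth j es hzero) = nth j cs C0.
Proof.
  revert cs j; induction es as [|e es IH]; intros cs j Hon Hl Hj.
  - simpl in Hj; lia.
  - destruct cs as [|c cs]; [discriminate|]. simpl in Hl.
    assert (Hon' : ON es).
    { intros i k Hi Hk. apply (Hon (S i) (S k)); simpl; lia. }
    simpl lincomb. rewrite Hinaddl, Hinscall.
    destruct j as [|j].
    + simpl nth. pose proof (Hon 0%nat 0%nat ltac:(simpl; lia) ltac:(simpl; lia)) as H0.
      simpl in H0. rewrite H0.
      rewrite inner_lincomb_orth. apply Ceq; simpl; ring.
      intros i Hi. pose proof (Hon (S i) 0%nat ltac:(simpl; lia) ltac:(simpl; lia)) as H1.
      simpl in H1. exact H1.
    + simpl nth. pose proof (Hon 0%nat (S j) ltac:(simpl; lia) ltac:(simpl in *; lia)) as H0.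
      simpl in H0. rewrite H0.
      rewrite IH by (auto; simpl in *; lia). apply Ceq; simpl; ring.
Qed.

Lemma ON_norm es i : ON es -> (i < length es)%nat -> hnorm H (nth i es hzero) = 1.
Proof.
  intros Hon Hi. unfold hnorm. rewrite (Hon i i Hi Hi), Nat.eqb_refl. simpl. apply sqrt_1.
Qed.

Lemma nth_map_lt {A B : Type} (f : A -> B) (l : list A) (a : A) (b : B) i :
  (i < length l)%nat -> nth i (map f l) b = f (nth i l a).
Proof.
  intros Hi. rewrite (nth_indep (map f l) b (f a)) by (rewrite length_map; auto).
  apply map_nth.
Qed.

Lemma exists_ON : (forall vs : list H, exists x, ~ in_span H vs x) ->
  forall N, exists es, length es = N /\ ON es.
Proof.
  intros Hinf N. induction N as [|N [es [Hl Hon]]].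
  - exists nil. split; auto. intros i j Hi; simpl in Hi; lia.
  - destruct (Hinf es) as [w Hw].
    set (z := lincomb H (map (fun e => hinner w e) es) es).
    set (u := hadd w (hopp z)).
    assert (Huo : forall j, (j < length es)%nat -> hinner u (nth j es hzero) = C0).
    { intros j Hj. unfold u. rewrite Hinaddl, opp_scal, Hinscall. unfold z.
      rewrite inner_lincomb_ON; auto; [|rewrite length_map; auto].
      rewrite (nth_map_lt _ _ hzero) by auto. apply Ceq; simpl; ring. }
    assert (Hun : hnorm H u > 0).
    { destruct (Rle_lt_dec (hnorm H u) 0) as [Hle|]; auto. exfalso.
      pose proof (hnorm_pos u). assert (E : hnorm H u = 0) by lra.
      pose proof (hnorm_sq u) as Hsq. rewrite E in Hsq. unfold Re in Hsq.
      assert (hinner u u = C0) by (apply Ceq; simpl; [lra| apply im_self]).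
      apply Hindef in H1. apply Hw. exists (map (fun e => hinner w e) es).
      fold z. unfold u in H1.
      rewrite <- (Hzero w), <- (oppl z), Hassoc, H1, zero_l. reflexivity. }
    set (e := hscal (Cr (/ hnorm H u)) u).
    assert (Hee : hinner e e = C1).
    { unfold e. rewrite Hinscall, inscalr. pose proof (im_self u) as Hi.
      pose proof (hnorm_sq u) as Hsq. unfold Re in Hsq.
      apply Ceq; simpl; rewrite Hi.
      - rewrite <- Hsq. field. lra.
      - ring. }
    assert (Heo : forall j, (j < length es)%nat -> hinner e (nth j es hzero) = C0).
    { intros j Hj. unfold e. rewrite Hinscall, Huo by auto. apply Ceq; simpl; ring. }
    exists (es ++ e :: nil). rewrite length_app. simpl. split; [lia|].
    intros i j Hi Hj. rewrite length_app in Hi, Hj; simpl in Hi, Hj.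
    destruct (Nat.lt_ge_cases i (length es)) as [Hi'|Hi'];
    destruct (Nat.lt_ge_cases j (length es)) as [Hj'|Hj'].
    + rewrite !app_nth1 by auto. apply Hon; auto.
    + rewrite app_nth1, app_nth2 by auto. replace (j - length es)%nat with 0%nat by lia. simpl.
      replace (Nat.eqb i j) with false by (symmetry; apply Nat.eqb_neq; lia).
      rewrite Hinconj, Heo by auto. apply Ceq; simpl; ring.
    + rewrite app_nth2, app_nth1 by auto. replace (i - length es)%nat with 0%nat by lia. simpl.
      replace (Nat.eqb i j) with false by (symmetry; apply Nat.eqb_neq; lia). auto.
    + rewrite !app_nth2 by auto. replace (i - length es)%nat with 0%nat by lia.
      replace (j - length es)%nat with 0%nat by lia. simpl.
      replace (Nat.eqb i j) with true by (symmetry; apply Nat.eqb_eq; lia). auto.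
Qed.

Definition Tt (es : list H) (t : R) : H -> H :=
  fun x => lincomb H (map (fun e => Cmul (Cr t) (hinner x e)) es) es.

Lemma lincomb_map_add (f g : H -> C) es :
  hadd (lincomb H (map f es) es) (lincomb H (map g es) es) = lincomb H (map (fun e => Cadd (f e) (g e)) es) es.
Proof.
  induction es as [|e es IH]; simpl. apply Hzero.
  rewrite add_swap4, IH, Hscaladdc. reflexivity.
Qed.

Lemma lincomb_map_scal a (f : H -> C) es :
  hscal a (lincomb H (map f es) es) = lincomb H (map (fun e => Cmul a (f e)) es) es.
Proof.
  induction es as [|e es IH]; simpl. apply scal_zero.
  rewrite Hscaladdv, IH, Hscalmul. reflexivity.
Qed.

Lemma Tt_fr es t : ON es -> is_finite_rank H (Tt es t).
Proof.
  intros Hon. split; [split; [split|]|].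
  - intros x y. unfold Tt. rewrite lincomb_map_add. f_equal. apply map_ext; intros e.
    rewrite Hinaddl. apply Ceq; simpl; ring.
  - intros a x. unfold Tt. rewrite lincomb_map_scal. f_equal. apply map_ext; intros e.
    rewrite Hinscall. apply Ceq; simpl; ring.
  - exists (INR (length es) * (2 * Rabs t)). intros x. unfold Tt.
    assert (Hn1 : forall e, In e es -> hnorm H e = 1).
    { intros e He. destruct (In_nth es e hzero He) as [i [Hi <-]]. apply ON_norm; auto. }
    clear Hon. induction es as [|e es IH].
    + simpl. unfold hnorm. rewrite inner0l. simpl. rewrite sqrt_0. lra.
    + simpl lincomb. eapply Rle_trans. apply triangle.
      rewrite length_cons, S_INR.
      pose proof (IH (fun e' He' => Hn1 e' (or_intror He'))).
      eapply Rle_trans. apply Rplus_le_compat_r. apply hnorm_scal_le.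
      rewrite (Hn1 e (or_introl eq_refl)).
      simpl Cre; simpl Cim.
      pose proof (CS x e) as C1'. pose proof (CS_im x e) as C2'.
      rewrite (Hn1 e (or_introl eq_refl)) in C1', C2'. unfold Re in C1'.
      replace (t * Cre (hinner x e) - 0 * Cim (hinner x e)) with (t * Cre (hinner x e)) by ring.
      replace (t * Cim (hinner x e) + 0 * Cre (hinner x e)) with (t * Cim (hinner x e)) by ring.
      rewrite !Rabs_mult. pose proof (Rabs_pos t). pose proof (hnorm_pos x).
      assert (Rabs t * Rabs (Cre (hinner x e)) <= Rabs t * hnorm H x) by (apply Rmult_le_compat_l; lra).
      assert (Rabs t * Rabs (Cim (hinner x e)) <= Rabs t * hnorm H x) by (apply Rmult_le_compat_l; lra).
      nra.
  - exists es. intros x. eexists. reflexivity.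
Qed.

Lemma Tt_inner es t k l : ON es -> (k < length es)%nat -> (l < length es)%nat ->
  Re (Tt es t (nth k es hzero)) (nth l es hzero) = if Nat.eqb k l then t else 0.
Proof.
  intros Hon Hk Hl. unfold Re, Tt. rewrite inner_lincomb_ON; auto; [|rewrite length_map; auto].
  rewrite (nth_map_lt _ _ hzero) by auto. rewrite Hon by auto.
  destruct (Nat.eqb k l); simpl; ring.
Qed.
End Hilb.

Module MX.
From mathcomp Require Import all_boot all_order all_algebra.
From mathcomp Require Import Rstruct zify.
Import Order.TTheory GRing.Theory Num.Theory.
Local Open Scope ring_scope.

Lemma rsumE n f : rsum n f = \sum_(i < n) f i.
Proof.
elim: n => [|n IH] /=; first by rewrite big_ord0.
by rewrite big_ord_recr /= IH.
Qed.

Definition tomx m n (A : nat -> nat -> R) : 'M[R]_(m, n) := \matrix_(i < m, j < n) A i j.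

Lemma mmulE m K n (A B : nat -> nat -> R) :
  tomx m n (mmul K A B) = tomx m K A *m tomx K n B.
Proof.
apply/matrixP => i j; rewrite !mxE /mmul rsumE.
by apply: eq_bigr => l _; rewrite !mxE.
Qed.

Lemma eqb_ord m (i j : 'I_m) : Nat.eqb i j = (i == j).
Proof.
case: (eqVneq i j) => [->|Hne]; first by rewrite PeanoNat.Nat.eqb_refl.
apply/PeanoNat.Nat.eqb_neq => H; move/eqP: Hne; apply; exact: val_inj.
Qed.

Lemma near_id_det m X : near_id m X -> \det (tomx m m X) != 0.
Proof.
rewrite /near_id rsumE => Hn.
set Xm := tomx m m X.
set E := 1%:M - Xm.
have Htot : \sum_(i < m) \sum_(j < m) `|E i j| < 2^-1.
  move: Hn => /RltP; congr (_ < _); apply: eq_bigr => i _; rewrite rsumE.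
  apply: eq_bigr => j _; rewrite /E !mxE eqb_ord; case: (i == j) => /=; rewrite distrC //.
apply/negP => /det0P [v vn0 vX].
have vE : v *m E = v by rewrite /E mulmxBr mulmx1 vX subr0.
set tot := \sum_(i < m) \sum_(j < m) `|E i j|.
have si : forall i, \sum_(j < m) `|E i j| <= tot.
  move=> i; rewrite /tot [X in _ <= X](bigD1 i) //= lerDl sumr_ge0 // => k _; exact: sumr_ge0.
have tot0 : 0 <= tot by rewrite sumr_ge0 // => i _; exact: sumr_ge0.
set V := \sum_(j < m) `|v 0 j|.
have HV : V <= V * tot.
  rewrite /V.
  have -> : \sum_(j < m) `|v 0 j| = \sum_(j < m) `|(v *m E) 0 j| by rewrite vE.
  apply: (le_trans (y := \sum_(j < m) \sum_(i < m) `|v 0 i| * `|E i j|)).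
    apply: ler_sum => j _; rewrite mxE.
    apply: (le_trans (ler_norm_sum _ _ _)).
    by apply: ler_sum => i _; rewrite normrM.
  rewrite exchange_big /= mulr_suml.
  apply: ler_sum => i _. rewrite -mulr_sumr. rewrite vE; apply: ler_wpM2l => //.
have V0 : V = 0.
  apply/eqP; rewrite eq_le sumr_ge0 ?andbT; last by move=> j _.
  have : V * (1 - tot) <= 0 by rewrite mulrBr mulr1 subr_le0.
  have Hpos : 0 < 1 - tot by rewrite subr_gt0 (lt_trans Htot) // invf_lt1 // ltr1n.
  by rewrite pmulr_lle0.
move: vn0; rewrite (_ : v = 0) ?eqxx //.
apply/rowP => j; rewrite mxE.
move/eqP: V0; rewrite psumr_eq0 //.
move/allP => /(_ j (mem_index_enum j)) /implyP /(_ isT).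
by rewrite normr_eq0 => /eqP.
Qed.

Definition ofmx {m n} (M : 'M[R]_(m, n)) : nat -> nat -> R :=
  fun i j => match (insub i : option 'I_m), (insub j : option 'I_n) with
             | Some i', Some j' => M i' j' | _, _ => 0%R end.

Lemma tomxK m n (M : 'M[R]_(m, n)) : tomx m n (ofmx M) = M.
Proof. by apply/matrixP => i j; rewrite !mxE /ofmx !valK. Qed.

Lemma near_id_rank m X : near_id m X -> \rank (tomx m m X) = m.
Proof. by move=> H; apply: mxrank_unit; rewrite unitmxE unitfE near_id_det. Qed.

Lemma ML1 (m n K : nat) (C Mx P Q D : nat -> nat -> R) :
  lt n m ->
  (forall i j, lt i K -> lt j K -> Mx i j = rsum n (fun p => Rmult (P i p) (Q p j))) ->
  ~ near_id m (mmul K (mmul K C Mx) D).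
Proof.
move=> /ssrnat.ltP ltnm HM /near_id_rank.
rewrite !mmulE.
have -> : tomx K K Mx = tomx K n P *m tomx n K Q.
  apply/matrixP => i j; rewrite !mxE HM; try exact/ssrnat.ltP.
  by rewrite rsumE; apply: eq_bigr => l _; rewrite !mxE.
move=> Hr.
have : (\rank (tomx m K C *m (tomx K n P *m tomx n K Q) *m tomx K m D) <= n)%N.
  apply: (leq_trans (mxrankM_maxl _ _)).
  apply: (leq_trans (mxrankM_maxr _ _)).
  apply: (leq_trans (mxrankM_maxl _ _)).
  exact: rank_leq_col.
by rewrite Hr leqNgt ltnm.
Qed.

Lemma ML2 (m N : nat) (A B : nat -> nat -> R) (c : R) :
  le (2 * m) N -> c <> IZR BinNums.Z0 ->
  (forall i j, lt i N -> lt j N -> Rminus (A i j) (B i j) = if Nat.eqb i j then c else IZR BinNums.Z0) ->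
  (exists C D, near_id m (mmul N (mmul N C A) D)) \/ (exists C D, near_id m (mmul N (mmul N C B) D)).
Proof.
move=> /ssrnat.leP HN Hc HAB.
have Hdiff : tomx N N A - tomx N N B = c%:M.
  apply/matrixP => i j; rewrite !mxE.
  have -> : (A i j - B i j) = Rminus (A i j) (B i j) by [].
  rewrite HAB; try exact/ssrnat.ltP.
  by rewrite eqb_ord; case: (i == j).
have HrN : \rank (c%:M : 'M[R]_N) = N.
  by rewrite -scalemx1 mxrank_scale_nz ?mxrank1 //; apply/eqP.
have Hsum : (N <= \rank (tomx N N A) + \rank (tomx N N B))%N.
  rewrite -{1}HrN -Hdiff.
  apply: (leq_trans (mxrank_add _ _)); rewrite leq_add2l -scaleN1r; exact: mxrank_scale.
have comp : forall (Z : nat -> nat -> R), (m <= \rank (tomx N N Z))%N ->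
    exists C D, near_id m (mmul N (mmul N C Z) D).
  move=> Z Hr.
  set Zm := tomx N N Z.
  set Cm := (pid_mx m : 'M[R]_(m, N)) *m invmx (col_ebase Zm).
  set Dm := invmx (row_ebase Zm) *m (pid_mx m : 'M[R]_(N, m)).
  exists (ofmx Cm), (ofmx Dm).
  have HE : tomx m m (mmul N (mmul N (ofmx Cm) Z) (ofmx Dm)) = 1%:M.
    rewrite !mmulE !tomxK.
    rewrite /Cm /Dm -/Zm -{2}(mulmx_ebase Zm).
    rewrite !mulmxA mulmxKV ?col_ebase_unit //.
    rewrite -!mulmxA mulmxA (mulmxA (row_ebase Zm)) mulmxV ?row_ebase_unit // mul1mx.
    rewrite mul_pid_mx mul_pid_mx.
    have -> : minn N (minn (minn N (minn m (\rank Zm))) m) = m.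
      apply/eqP; rewrite eqn_leq geq_min geq_minr orbT /=.
      have HmN : (m <= N)%N by apply: (leq_trans _ HN); rewrite leq_pmull.
      by rewrite !leq_min leqnn Hr HmN.
    by rewrite pid_mx_1.
  rewrite /near_id rsumE.
  rewrite (eq_bigr (fun _ => 0)) ?big1 //.
    by apply: Rinv_0_lt_compat; apply: IZR_lt.
  move=> i _; rewrite rsumE big1 // => j _.
  have := congr1 (fun M : 'M[R]_m => M i j) HE; rewrite !mxE => ->.
  by rewrite eqb_ord; case: (i == j) => /=; rewrite (Rminus_diag_eq _ _ erefl) Rabs_R0.
case: (leqP m (\rank (tomx N N A))) => HA; first by left; exact: comp.
right; apply: comp.
rewrite leqNgt; apply/negP => HB.
have : (\rank (tomx N N A) + \rank (tomx N N B) < N)%N.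
  move: HA HB HN; clear; lia.
by rewrite ltnNge Hsum.
Qed.

End MX.

Section Main.
Variable H : PreHilbert.
Hypothesis Hassoc : forall x y z : H, hadd x (hadd y z) = hadd (hadd x y) z.
Hypothesis Hcomm : forall x y : H, hadd x y = hadd y x.
Hypothesis Hzero : forall x : H, hadd x hzero = x.
Hypothesis Hoppr : forall x : H, hadd x (hopp x) = hzero.
Hypothesis Hscal1 : forall x : H, hscal C1 x = x.
Hypothesis Hscalmul : forall a b (x : H), hscal (Cmul a b) x = hscal a (hscal b x).
Hypothesis Hscaladdv : forall a (x y : H), hscal a (hadd x y) = hadd (hscal a x) (hscal a y).
Hypothesis Hscaladdc : forall a b (x : H), hscal (Cadd a b) x = hadd (hscal a x) (hscal b x).
Hypothesis Hinaddl : forall x y z : H, hinner (hadd x y) z = Cadd (hinner x z) (hinner y z).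
Hypothesis Hinscall : forall a (x y : H), hinner (hscal a x) y = Cmul a (hinner x y).
Hypothesis Hinconj : forall x y : H, hinner y x = Cconj (hinner x y).
Hypothesis Hinpos : forall x : H, 0 <= Cre (hinner x x).
Hypothesis Hindef : forall x : H, hinner x x = C0 -> x = hzero.
Hypothesis Hinf : forall vs : list H, exists x, ~ in_span H vs x.

Definition Mx (T : H -> H) (e : nat -> H) : nat -> nat -> R :=
  fun k l => Re H (T (e k)) (e l).

Definition G (m : nat) (T : H -> H) : Prop :=
  is_bounded_op H T /\ exists K (e : nat -> H) (Cm Dm : nat -> nat -> R),
    near_id m (mmul K (mmul K Cm (Mx T e)) Dm).

Definition F (m : nat) (T : H -> H) : Prop := is_finite_rank H T /\ ~ G m T.

Lemma G_sot m : sot_open H (G m).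
Proof.
  split. intros T [HT _]; exact HT.
  intros T [HT [K [e [Cm [Dm Hn]]]]].
  set (XT := mmul K (mmul K Cm (Mx T e)) Dm).
  set (dl := fun i j : nat => Rabs (XT i j - (if Nat.eqb i j then 1 else 0))).
  set (sT := rsum m (fun i => rsum m (fun j => dl i j))).
  set (Bij := fun i j => rsum K (fun l => rsum K (fun k => Rabs (Cm i k) * hnorm H (e l)) * Rabs (Dm l j))).
  set (Btot := rsum m (fun i => rsum m (fun j => Bij i j))).
  assert (HB0 : 0 <= Btot).
  { apply rsum_nonneg; intros; apply rsum_nonneg; intros; apply rsum_nonneg; intros.
    apply Rmult_le_pos; [|apply Rabs_pos]. apply rsum_nonneg; intros.
    apply Rmult_le_pos; [apply Rabs_pos|apply hnorm_pos]. }
  assert (Hmu1 : sT < / 2) by exact Hn. assert (Hmu : 0 < / 2 - sT) by lra.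
  set (eps := (/ 2 - sT) / (1 + Btot)).
  assert (Heps : 0 < eps) by (apply Rdiv_lt_0_compat; lra).
  exists (map e (seq 0 K)), eps. split; [lra|].
  intros S HS Hclose.
  split; [exact HS|]. exists K, e, Cm, Dm.
  set (XS := mmul K (mmul K Cm (Mx S e)) Dm).
  assert (HdM : forall k l, (k < K)%nat -> Rabs (Mx S e k l - Mx T e k l) <= eps * hnorm H (e l)).
  { intros k l Hk. unfold Mx. rewrite <- (Re_subl H) by auto.
    eapply Rle_trans. apply (CS H); auto.
    apply Rmult_le_compat_r. apply hnorm_pos. left. apply Hclose.
    apply in_map, in_seq. lia. }
  assert (HdX : forall i j, Rabs (XS i j - XT i j) <= eps * Bij i j).
  { intros i j. unfold XS, XT, mmul, Bij.
    rewrite <- rsum_minus.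
    eapply Rle_trans. apply Rabs_rsum.
    rewrite <- rsum_scal. apply rsum_le. intros l Hl.
    rewrite <- Rmult_minus_distr_r, <- rsum_minus, Rabs_mult.
    rewrite <- Rmult_assoc. apply Rmult_le_compat_r. apply Rabs_pos.
    eapply Rle_trans. apply Rabs_rsum.
    rewrite <- rsum_scal. apply rsum_le. intros k Hk.
    rewrite <- Rmult_minus_distr_l, Rabs_mult.
    pose proof (HdM k l Hk). pose proof (Rabs_pos (Cm i k)). nra. }
  unfold near_id. fold XS.
  apply Rle_lt_trans with (sT + eps * Btot).
  - unfold sT, Btot. rewrite <- rsum_scal, <- rsum_plus. apply rsum_le; intros i Hi.
    rewrite <- rsum_scal, <- rsum_plus. apply rsum_le; intros j Hj.
    unfold dl. pose proof (HdX i j).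
    replace (XS i j - (if Nat.eqb i j then 1 else 0)) with
      ((XT i j - (if Nat.eqb i j then 1 else 0)) + (XS i j - XT i j)) by ring.
    eapply Rle_trans. apply Rabs_triang. lra.
  - unfold eps in *.
    replace ((/ 2 - sT) / (1 + Btot) * Btot) with ((/ 2 - sT) - (/ 2 - sT) / (1 + Btot)) by (field; lra).
    lra.
Qed.

Lemma fold_norm_ge (xs : list H) x : In x xs -> hnorm H x <= fold_right (fun y acc => hnorm H y + acc) 0 xs.
Proof.
  induction xs as [|y xs IH]; simpl; [tauto|].
  assert (0 <= fold_right (fun y acc => hnorm H y + acc) 0 xs).
  { clear. induction xs; simpl. lra. pose proof (hnorm_pos H a). lra. }
  intros [->|Hin]. lra. pose proof (IH Hin). pose proof (hnorm_pos H y). lra.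
Qed.

Lemma sot_norm U : sot_open H U -> norm_open H U.
Proof.
  intros [HU1 HU2]. split; auto.
  intros T HT. destruct (HU2 T HT) as [xs [eps [Heps Hall]]].
  set (L := fold_right (fun y acc => hnorm H y + acc) 0 xs).
  assert (HL : 0 <= L).
  { unfold L. clear. induction xs; simpl. lra. pose proof (hnorm_pos H a). lra. }
  exists (eps / (1 + L)). split. apply Rdiv_lt_0_compat; lra.
  intros S HS Hclose. apply Hall; auto. intros x Hx.
  eapply Rle_lt_trans. apply Hclose.
  pose proof (fold_norm_ge xs x Hx). fold L in H0.
  pose proof (hnorm_pos H x).
  assert (eps / (1 + L) * hnorm H x <= eps / (1 + L) * L).
  { apply Rmult_le_compat_l; auto. left; apply Rdiv_lt_0_compat; lra. }
  assert (eps / (1 + L) * L < eps).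
  { replace (eps / (1 + L) * L) with (eps - eps / (1 + L)) by (field; lra).
    assert (0 < eps / (1 + L)) by (apply Rdiv_lt_0_compat; lra). lra. }
  lra.
Qed.

Lemma Re_lincomb cs vs y : length cs = length vs ->
  Re H (lincomb H cs vs) y = rsum (length vs) (fun p => Cre (nth p cs C0) * Re H (nth p vs hzero) y
                                                   - Cim (nth p cs C0) * Cim (hinner (nth p vs hzero) y)).
Proof.
  revert cs; induction vs as [|v vs IH]; intros cs Hl.
  - simpl. unfold Re. rewrite lincomb_nil_r, (inner0l H) by auto. reflexivity.
  - destruct cs as [|c cs]; [discriminate|]. simpl in Hl.
    simpl length. rewrite rsum_shift. simpl lincomb. rewrite (Re_addl H) by auto. rewrite IH by lia.
    simpl nth. unfold Re at 1. rewrite Hinscall. simpl. reflexivity.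
Qed.

Lemma cover T : is_finite_rank H T -> exists m, ~ G m T.
Proof.
  intros [HTb [vs Hvs]]. set (n := length vs). exists (n + n + 1)%nat.
  intros [_ [K [e [Cm [Dm Hn]]]]].
  assert (Hc : forall i, {cs | length cs = length vs /\ T (e i) = lincomb H cs vs}).
  { intros i. apply constructive_indefinite_description.
    destruct (Hvs (e i)) as [cs0 Hcs0].
    assert (Hp : exists cs, length cs = length vs /\ lincomb H cs vs = lincomb H cs0 vs) by (apply lincomb_pad; auto).
    destruct Hp as [cs [Hl He]].
    exists cs. split; auto. rewrite He; auto. }
  set (cs := fun i => proj1_sig (Hc i)).
  set (P := fun i p => if Nat.ltb p n then Cre (nth p (cs i) C0) else - Cim (nth (p - n) (cs i) C0)).
  set (Q := fun p j => if Nat.ltb p n then Re H (nth p vs hzero) (e j) else Cim (hinner (nth (p - n) vs hzero) (e j))).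
  apply (MX.ML1 (n + n + 1) (n + n) K Cm (Mx T e) P Q Dm); [lia| |exact Hn].
  intros i j _ _. unfold Mx.
  rewrite (proj2 (proj2_sig (Hc i))). rewrite Re_lincomb by apply (proj2_sig (Hc i)).
  fold n. rewrite rsum_split, <- rsum_plus. apply rsum_ext. intros p Hp.
  unfold P, Q. replace (Nat.ltb p n) with true by (symmetry; apply Nat.ltb_lt; auto).
  replace (Nat.ltb (n + p) n) with false by (symmetry; apply Nat.ltb_ge; lia).
  replace (n + p - n)%nat with p by lia. unfold cs, n. ring.
Qed.

Lemma bad m es t s y : length es = (2 * m)%nat -> ON H es -> t <> s -> is_finite_rank H y ->
  F m (op_add H y (op_opp H (Tt H es t))) -> F m (op_add H y (op_opp H (Tt H es s))) -> False.
Proof.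
  intros Hl Hon Hts Hy [Fa Ga] [Fb Gb].
  set (e := fun k => nth k es hzero).
  destruct (MX.ML2 m (2 * m) (Mx (op_add H y (op_opp H (Tt H es t))) e)
              (Mx (op_add H y (op_opp H (Tt H es s))) e) (s - t)) as [[Cm [Dm Hn]]|[Cm [Dm Hn]]].
  - lia.
  - lra.
  - intros k l Hk Hl'. unfold Mx, op_add, op_opp, e.
    rewrite !(Re_addl H) by auto. rewrite !(Re_oppl H) by auto.
    rewrite !(Tt_inner H) by (auto; lia).
    destruct (Nat.eqb k l); ring.
  - apply Ga. split. apply Fa. exists (2 * m)%nat, e, Cm, Dm. exact Hn.
  - apply Gb. split. apply Fb. exists (2 * m)%nat, e, Cm, Dm. exact Hn.
Qed.

Lemma not_polish (op : ((H -> H) -> Prop) -> Prop) :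
  (forall U, sot_open H U -> op U) -> ~ Bf_polishable H op.
Proof.
  intros Hop [tau [[[Htop [[d [Hd Hdense]] [dist [Hpos [Hz [Hsym [Htri [Hopen Hcompl]]]]]]]] [Hcont _]] Hiff]].
  assert (HBP : forall m, BP (H -> H) (is_finite_rank H) tau (F m)).
  { intros m. apply borel_BP; auto. apply Hiff.
    exists (fun T => is_bounded_op H T /\ ~ G m T). split.
    - intros Sg HSg HopSg. apply (proj1 (proj2 (proj2 HSg))). apply HopSg. apply Hop. apply G_sot.
    - intros T. unfold F. split.
      + intros [Hf Hg]. split; auto. split; auto. apply Hf.
      + intros [[_ Hg] Hf]. split; auto. }
  assert (Hfr_T : forall es t, ON H es -> is_finite_rank H (Tt H es t)).
  { intros es t Hon. apply Tt_fr; auto. }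
  assert (HON0 : ON H nil) by (intros i j Hi; simpl in Hi; lia).
  destruct (main_desc (H -> H) (is_finite_rank H) tau dist Htop Hz Hsym Htri Hopen Hcompl F HBP)
    as [m [U [u0 [HU [Hu0 HM]]]]].
  { intros T HT. destruct (cover T HT) as [m Hm]. exists m. split; auto. }
  { exists (Tt H nil 0). auto. }
  destruct (exists_ON H Hassoc Hcomm Hzero Hoppr Hscal1 Hscaladdc Hinaddl Hinscall Hinconj Hinpos Hindef Hinf (2 * m))
    as [es [Hl Hon]].
  apply (pigeon (H -> H) (is_finite_rank H) tau dist d Htop Hd Hdense Hz Hsym Htri Hopen Hcompl
           (op_add H) (op_opp H)) with (A := F m) (U := U) (u0 := u0) (T := Tt H es); auto.
  - intros a b Ha Hb. apply fr_add; auto.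
  - intros a Ha. apply fr_opp; auto.
  - intros y c _ _. apply op_cancel1; auto.
  - intros y c _ _. apply op_cancel2; auto.
  - intros t s y Hts Hy Ht Hs. apply (bad m es t s y); auto.
Qed.

End Main.

Theorem mainTheorem11 (H : PreHilbert) (hH : is_inf_dim_sep_Hilbert H) :
  ~ Bf_polishable H (@norm_open H) /\ ~ Bf_polishable H (@sot_open H).
Proof.
  destruct hH as (Hassoc & Hcomm & Hzero & Hoppr & Hscal1 & Hscalmul & Hscaladdv & Hscaladdc &
                  Hinaddl & Hinscall & Hinconj & Hinpos & Hindef & _ & _ & Hinf).
  split.
  - apply not_polish; auto. intros U HU. apply sot_norm; auto.
  - apply not_polish; auto.
Qed.
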